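(* Let $k\ge1$, $n\ge0$, let $m_1,\dots,m_k$ be nonnegative integers and $t_1,\dots,t_{k-1}$ nonnegative integers. There is a bijection between the set of $k$-marked Durfee symbols $\eta$ of $n$ with $\rho_i(\eta)=m_i$ for $1\le i\le k$ and $\mathrm{nb}_i(\eta)=t_i$ for $1\le i\le k-1$, and the set of $k$-marked strict shifted Durfee symbols $\bar\eta$ of $n$ with $\rho_i(\bar\eta)=m_i+2t_i$ for $1\le i\le k-1$ and $\rho_k(\bar\eta)=m_k$.
   Context: A partition is a finite nonincreasing sequence $\lambda=(\lambda_1,\dots,\lambda_r)$ of positive integers (possibly empty); $l(\lambda)=r$, $|\lambda|=\sum\lambda_i$, $\lambda_1$ the largest part. Let $k\ge1$. A $k$-marked Durfee symbol of $n$ is an array $\eta=\begin{pmatrix}\alpha^k,&\dots,&\alpha^1\\ \beta^k,&\dots,&\beta^1\end{pmatrix}_D$ consisting of an integer $D\ge0$ and $2k$ partitions $\alpha^i,\beta^i$ with $\sum_{i=1}^k(|\alpha^i|+|\beta^i|)+D^2=n$, such that: (1) $\alpha^i$ is nonempty for $1\le i<k$; (2) for $1\le i<k$ every part of $\beta^i$ is $\le\alpha^i_1$, and for $2\le i\le k$ every part of $\alpha^i$ and every part of $\beta^i$ is $\ge\alpha^{i-1}_1$; (3) all parts of $\alpha^k$ and $\beta^k$ are $\le D$. The pair $(\alpha^i,\beta^i)$ is the $i$th vector. The $i$th rank is $\rho_i(\eta)=l(\alpha^i)-l(\beta^i)-1$ for $1\le i<k$ and $\rho_k(\eta)=l(\alpha^k)-l(\beta^k)$.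 A pair of partitions $(\alpha,\beta)$ is strict shifted if $l(\alpha)>l(\beta)$ and $\alpha_{i+1}>\beta_i$ for $1\le i\le l(\beta)$. A $k$-marked Durfee symbol is strict shifted if each of its vectors $(\alpha^i,\beta^i)$ with $1\le i\le k-1$ is strict shifted. Balanced parts: for a pair of partitions $(\gamma,\delta)$, with the convention $\gamma_j=0$ for $j>l(\gamma)$, the parts $\delta_1,\dots,\delta_{l(\delta)}$ are classified recursively in increasing order of index: $\delta_i$ is balanced iff $\gamma_{i+1}\le\delta_i$ and the number of indices $j$ with $2\le j\le l(\gamma)$ and $\gamma_j>\delta_i$ equals the number of indices $j<i$ for which $\delta_j$ is unbalanced. $b(\gamma,\delta)$ is the number of balanced parts. The $i$th balanced number of a $k$-marked Durfee symbol $\eta$ is $\mathrm{nb}_i(\eta)=b(\alpha^i,\beta^i)$ for $1\le i<k$ and $\mathrm{nb}_k(\eta)=0$. *)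

(* Defs.v *)
From mathcomp Require Import all_boot all_order all_algebra.
Set Implicit Arguments. Unset Strict Implicit. Unset Printing Implicit Defensive.
Import GRing.Theory Num.Theory.

(* Parts are 1-based in the paper: lambda_i = nth 0 lambda (i-1);
   nth 0 returns 0 beyond the length (the paper's convention gamma_j = 0). *)
Definition is_partition (l : seq nat) : bool :=
  all (fun x => 0 < x) l && sorted geq l.

Definition lpart (l : seq nat) : nat := head 0 l.

(* A (candidate) k-marked Durfee symbol: the integer D and the list of
   vectors [:: (alpha^1,beta^1); ...; (alpha^k,beta^k)]. *)
Record dsymb := DSymb { ds_D : nat; ds_vec : seq (seq nat * seq nat) }.

(* 1-based access to the i-th vector *)
Definition alpha (e : dsymb) (i : nat) : seq nat :=
  (nth ([::], [::]) (ds_vec e) i.-1).1.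
Definition beta (e : dsymb) (i : nat) : seq nat :=
  (nth ([::], [::]) (ds_vec e) i.-1).2.

Definition ds_weight (e : dsymb) : nat :=
  sumn [seq sumn v.1 + sumn v.2 | v <- ds_vec e] + ds_D e ^ 2.

Definition is_kmds (k n : nat) (e : dsymb) : Prop :=
  size (ds_vec e) = k /\
  (forall i, 1 <= i <= k -> is_partition (alpha e i) /\ is_partition (beta e i)) /\
  ds_weight e = n /\
  (forall i, 1 <= i < k -> alpha e i != [::]) /\
  (forall i, 1 <= i < k -> all (fun x => x <= lpart (alpha e i)) (beta e i)) /\
  (forall i, 2 <= i <= k ->
     all (fun x => lpart (alpha e i.-1) <= x) (alpha e i) /\
     all (fun x => lpart (alpha e i.-1) <= x) (beta e i)) /\
  (all (fun x => x <= ds_D e) (alpha e k) /\ all (fun x => x <= ds_D e) (beta e k)).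

Definition rank (k : nat) (e : dsymb) (i : nat) : int :=
  if i < k then ((size (alpha e i))%:Z - (size (beta e i))%:Z - 1)%R
  else ((size (alpha e i))%:Z - (size (beta e i))%:Z)%R.

Definition strict_shifted (a b : seq nat) : Prop :=
  size b < size a /\ (forall i, i < size b -> nth 0 b i < nth 0 a i.+1).

Definition is_strict_shifted_kmds (k n : nat) (e : dsymb) : Prop :=
  is_kmds k n e /\ (forall i, 1 <= i < k -> strict_shifted (alpha e i) (beta e i)).

(* balanced parts of (g, d): scanning d_1, d_2, ... in order; [i] is the
   1-based index of the current part x = d_i (so g_{i+1} = nth 0 g i),
   [u] is the number of unbalanced parts d_j, j < i, found so far.
   count over [behead g] counts the indices 2 <= j <= l(g) with g_j > x. *)
Fixpoint bal_aux (g d : seq nat) (i u : nat) : nat :=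
  match d with
  | [::] => 0
  | x :: d' =>
      if (nth 0 g i <= x) && (count (fun y => x < y) (behead g) == u)
      then (bal_aux g d' i.+1 u).+1
      else bal_aux g d' i.+1 u.+1
  end.

Definition balanced (g d : seq nat) : nat := bal_aux g d 1 0.

Definition nb (k : nat) (e : dsymb) (i : nat) : nat :=
  if i < k then balanced (alpha e i) (beta e i) else 0.

(* Main.v *)
Require Import Defs.
From mathcomp Require Import all_boot all_order all_algebra.
From Stdlib Require Import Lia.
Set Implicit Arguments. Unset Strict Implicit. Unset Printing Implicit Defensive.

Definition W := seq (nat * bool).
Fixpoint dip (s : W) : nat := match s with [::] => 0 | p :: r => if p.2 then (dip r).+1 else (dip r).-1 end.
Fixpoint bal (c : nat) (s : W) : nat := match s with [::] => 0 | p :: r => if p.2 then (if c is c'.+1 then bal c' r else (bal 0 r).+1) else bal c.+1 r end.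
Fixpoint Fw (c : nat) (s : W) : W := match s with [::] => [::] | p :: r => if p.2 then (if c is c'.+1 then p :: Fw c' r else (p.1,false) :: Fw 0 r) else p :: Fw c.+1 r end.
Fixpoint Gw (k : nat) (s : W) : W := match s with [::] => [::] | p :: r => if p.2 then p :: Gw k r else if (0 < k) && (dip r == 0) then (p.1,true) :: Gw k.-1 r else p :: Gw k r end.

Lemma bal_dip c s : bal c s = dip s - c.
Proof.
elim: s c => [|[v b] r IH] c //=; case: b => /=.
  by case: c => [|c]; rewrite IH ?subn0 ?subSS.
by rewrite IH; case: (dip r) => [|d] //=; rewrite subSS.
Qed.

Lemma dipF_le c s : dip (Fw c s) <= c.
Proof.
elim: s c => [|[v b] r IH] c //=; case: b => /=.
  case: c => [|c] /=; first by case: (dip _) (IH 0) => [|[|d]].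
  by rewrite ltnS IH.
by have := IH c.+1; case: (dip _) => [|d] //=.
Qed.

Lemma dipF_ge c s : 0 < bal c s -> c <= dip (Fw c s).
Proof.
elim: s c => [|[v b] r IH] c //=; case: b => /=.
  by case: c => [|c] //= /IH.
by move/IH; case: (dip _) => [|d] //=.
Qed.

Lemma GF c s : Gw (bal c s) (Fw c s) = s.
Proof.
elim: s c => [|[v b] r IH] c //=; case: b => /=.
  case: c => [|c] /=; rewrite ?IH //.
  by have := dipF_le 0 r; rewrite leqn0 => /eqP ->.
case: (posnP (bal c.+1 r)) => [h0|h].
  by rewrite h0 /=; congr (_ :: _); rewrite -[RHS](IH c.+1) h0.
have := dipF_ge h; case E: (dip (Fw c.+1 r)) => [|d] //= _.
by rewrite IH.
Qed.

Lemma FG k c s : (0 < k -> c = dip s) -> dip s <= c -> Fw c (Gw k s) = s.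
Proof.
elim: s k c => [|[v b] r IH] k c //=; case: b => /=.
  case: c => [|c] //= h1 h2; rewrite IH //.
  by move=> /h1 [].
case: k => [|k] /=.
  by move=> _ h; rewrite IH //; case: (dip r) h => [|d] //=.
case: eqP => [d0|d0] /= h1 h2.
  rewrite d0 /= in h1; rewrite (h1 erefl) /= IH //; rewrite d0 //.
rewrite IH //; move: (h1 erefl) h2 d0; case: (dip r) => [|d] //= -> //.
Qed.

Lemma cnt_gen s : count (fun p => p.2) s <= count (fun p => ~~ p.2) s + dip s.
Proof.
elim: s => [|[v b] r IH] //=; case: b => /=.
  by rewrite add0n add1n addnS ltnS.
rewrite add0n add1n; case: (dip r) IH => [|d] /=; rewrite ?addn0 => h.
  exact: leqW.
by rewrite addSn -addnS.
Qed.

Lemma G0 s : Gw 0 s = s.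
Proof. by elim: s => [|[v b] r IH] //=; case: b; rewrite IH. Qed.

Lemma balG k c s : (0 < k -> c = dip s) -> dip s <= c ->
  k + count (fun p => p.2) s <= count (fun p => ~~ p.2) s + dip s -> bal c (Gw k s) = k.
Proof.
elim: s k c => [|[v b] r IH] k c //=.
  by rewrite addn0 leqn0 => _ _ /eqP.
case: b => /=.
  case: c => [|c] //= h1 h2 h3; apply: IH => //; first by move=> /h1 [].
  by move: h3; rewrite add1n add0n !addnS ltnS.
case: k => [|k] /=.
  move=> _ h _; rewrite G0 bal_dip; apply/eqP; rewrite subn_eq0; case: (dip r) h => [|d] //=.
case: (dip r =P 0) => [d0|d0] /= h1 h2.
  rewrite d0 /= in h1; rewrite (h1 erefl) /= => h3; rewrite IH //; rewrite d0 //.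
  by move: h3; rewrite d0 add1n add0n !addn0 addSn ltnS.
move: (h1 erefl) h2 d0; case E: (dip r) => [|d] //= -> _ _ h3; apply: IH => //; rewrite ?E //.
by move: h3; rewrite add0n add1n !addSn addnS.
Qed.

Lemma countF c s : count (fun p => p.2) (Fw c s) + bal c s = count (fun p => p.2) s.
Proof.
elim: s c => [|[v b] r IH] c //=; case: b => /=.
  by case: c => [|c] /=; [rewrite add0n addnS IH | rewrite -addnA IH].
by rewrite IH.
Qed.

Lemma fstF c s : map fst (Fw c s) = map fst s.
Proof. by elim: s c => [|[v b] r IH] c //=; case: b => /=; [case: c => [|c] /=|]; rewrite IH. Qed.
Lemma fstG k s : map fst (Gw k s) = map fst s.
Proof. by elim: s k => [|[v b] r IH] k //=; case: b => /=; [|case: ifP] => *; rewrite /= IH. Qed.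

Definition R (x y : nat * bool) : bool := (y.1 < x.1) || ((x.1 == y.1) && (y.2 ==> x.2)).

Lemma Fpath s c v b b' : path R (v,b) s -> (b' = b \/ (b' = false /\ b = true /\ c = 0)) ->
  path R (v,b') (Fw c s).
Proof.
elim: s c v b b' => [|[w l] r IH] c v b b' //= /andP[hR hp] hb.
have key : forall l', ((l' = l /\ (l -> 0 < c)) \/ (l' = false /\ l = true)) -> R (v,b') (w,l').
  move: hR hb; rewrite /R /=; case: (ltngtP w v) => [//|//|_] /=.
  move=> h1 h2 l' h3; move: h1 h2 h3; case: b; case: b'; case: l' => //=; case: (l) => //=; idtac. all: try (intuition discriminate).
  move=> _ [//|[_ [_ ->]]] [[_ h]|[]] //. by have := h isT.
case: l hR hp key => /= hR hp key.
  case: c hb key => [|c] hb key /=.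
    rewrite key /=; last by right.
    by apply: IH hp _; right.
  rewrite key /=; last by left.
  by apply: IH hp _; left.
rewrite key /=; last by left.
by apply: IH hp _; left.
Qed.

Lemma Fsorted c s : sorted R s -> sorted R (Fw c s).
Proof.
case: s => [|[w l] r] //= hp; case: l hp => /=.
  by case: c => [|c] hp /=; apply: Fpath hp _; [right | left].
by move=> hp; apply: Fpath hp _; left.
Qed.

Lemma Gpath s k v b b' : path R (v,b) s -> (b' = b \/ (b = false /\ b' = true)) ->
  (b' = false -> ~~ ((0 < k) && (dip s == 0))) -> path R (v,b') (Gw k s).
Proof.
elim: s k v b b' => [|[w l] r IH] k v b b' //= /andP[hR hp] hb hc.
case: l hR hp hc => /= hR hp hc.
  have -> : R (v,b') (w,true).
    move: hR hb; rewrite /R /=; case: (ltngtP w v) => [//|//|_] /=.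
    clear hc; case: b; case: b' => //=; intuition discriminate.
  by rewrite /=; apply: IH hp _ _ => //; left.
case E: ((0 < k) && (dip r == 0)); rewrite /=.
  have -> /= : R (v,b') (w,true).
    move: hR hb hc; rewrite /R /=; case: (ltngtP w v) => [//|//|ew] /=.
    case: b' => //= _ _ /(_ erefl); move: E => /andP[-> /eqP ->] //.
  by apply: IH hp _ _ => //; right.
rewrite /=; have -> /= : R (v,b') (w,false).
  by move: hR hb; rewrite /R /=; case: (ltngtP w v) => [//|//|_] /=.
by apply: IH hp _ _ => //; [left| rewrite E].
Qed.

Lemma Gsorted k s : sorted R s -> sorted R (Gw k s).
Proof.
case: s => [|[w l] r] //= hp; case: l hp => /= hp.
  by apply: Gpath hp _ _ => //; left.
case: ifP => E /=; apply: Gpath hp _ _ => //; [right|left|rewrite E] => //.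
Qed.

Ltac nlia := unfold addn, addn_rec, muln, muln_rec, subn, subn_rec in *; lia.

Lemma R_total : total R.
Proof.
move=> [x a] [y b]; rewrite /R /=; case: (ltngtP x y) => [//|//|_] /=.
by case: a; case: b.
Qed.
Lemma R_trans : transitive R.
Proof.
move=> [y b] [x a] [z c]; rewrite /R /= => h1 h2.
case/orP: h1 => [h1|/andP[/eqP e1 h1]]; case/orP: h2 => [h2|/andP[/eqP e2 h2]].
- by rewrite (ltn_trans h2 h1).
- by rewrite -e2 h1.
- by rewrite e1 h2.
- by rewrite e1 e2 eqxx ltnn /=; case: a b c h1 h2 => [] [] [].
Qed.
Lemma R_anti : antisymmetric R.
Proof.
move=> [x a] [y b]; rewrite /R /= => /andP[].
case: (ltngtP x y) => [//|//|e] /= h1 h2; rewrite e.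
by case: a b h1 h2 => [] [].
Qed.

Definition closesW (s : W) := [seq p.1 | p <- s & p.2].
Definition opensW (s : W) := [seq p.1 | p <- s & ~~ p.2].
Definition lmerge (b a : seq nat) : W := merge R [seq (x,true) | x <- b] [seq (x,false) | x <- a].

Lemma lmerge_nil_l a : lmerge [::] a = [seq (x,false) | x <- a].
Proof. by []. Qed.
Lemma lmerge_nil_r b : lmerge b [::] = [seq (x,true) | x <- b].
Proof. by case: b. Qed.
Lemma lmerge_cons x b y a : lmerge (x :: b) (y :: a) =
  if y <= x then (x,true) :: lmerge b (y :: a) else (y,false) :: lmerge (x :: b) a.
Proof. by rewrite /lmerge /= {1}/R /= andbT eq_sym orbC -leq_eqVlt. Qed.

Lemma closes_lmerge b a : closesW (lmerge b a) = b.
Proof.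
elim: b a => [|x b IHb] a; first by rewrite lmerge_nil_l; elim: a.
elim: a => [|y a IHa]; first by rewrite lmerge_nil_r /closesW; elim: (x :: b) => //= z l ->.
by rewrite lmerge_cons; case: ifP => _; rewrite /closesW /= -/(closesW _) ?IHb ?IHa.
Qed.

Lemma opens_lmerge b a : opensW (lmerge b a) = a.
Proof.
elim: b a => [|x b IHb] a; first by rewrite lmerge_nil_l /opensW; elim: a => //= z l ->.
elim: a => [|y a IHa]; first by rewrite lmerge_nil_r; elim: (x :: b).
by rewrite lmerge_cons; case: ifP => _; rewrite /opensW /= -/(opensW _) ?IHb ?IHa.
Qed.

Lemma lmerge_sorted b a : sorted geq b -> sorted geq a -> sorted R (lmerge b a).
Proof.
move=> hb ha; apply: (merge_sorted R_total); rewrite sorted_map.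
  apply: sub_sorted hb => x y /=; rewrite /R /= andbT eq_sym orbC -leq_eqVlt //.
apply: sub_sorted ha => x y /=; rewrite /R /= andbT eq_sym orbC -leq_eqVlt //.
Qed.

Lemma map_closes s : [seq (x,true) | x <- closesW s] = [seq p <- s | p.2].
Proof. by elim: s => [|[v b] s IH] //=; case: b => /=; rewrite IH. Qed.
Lemma map_opens s : [seq (x,false) | x <- opensW s] = [seq p <- s | ~~ p.2].
Proof. by elim: s => [|[v b] s IH] //=; case: b => /=; rewrite IH. Qed.

Lemma lmerge_split s : sorted R s -> lmerge (closesW s) (opensW s) = s.
Proof.
move=> hs; apply: (sorted_eq R_trans R_anti).
- apply: (merge_sorted R_total); by rewrite ?map_closes ?map_opens; apply: sorted_filter => //; exact: R_trans.
- exact: hs.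
rewrite /lmerge perm_merge map_closes map_opens.
by rewrite (perm_filterC (fun p : nat * bool => p.2) s).
Qed.

Lemma fst_lmerge b a : perm_eq (map fst (lmerge b a)) (b ++ a).
Proof.
rewrite /lmerge; have h : perm_eq (merge R [seq (x, true) | x <- b] [seq (x, false) | x <- a]) ([seq (x, true) | x <- b] ++ [seq (x, false) | x <- a]).
  by rewrite perm_merge.
by have := perm_map fst h; rewrite map_cat -!map_comp /= !map_id.
Qed.

Lemma geq_trans : transitive geq.
Proof. by move=> y x z h1 h2; exact: leq_trans h2 h1. Qed.

Fixpoint balX (a d : seq nat) (u : nat) : nat :=
  match d with
  | [::] => 0
  | x :: d' => if count (fun y => x < y) a == u then (balX a d' u).+1 else balX a d' u.+1
  end.

Lemma count_le_zero (a : seq nat) y x : path geq y a -> y <= x -> count (fun z => x < z) a = 0.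
Proof.
move=> /(order_path_min geq_trans) /allP h hyx; apply/eqP; rewrite -leqn0 leqNgt -has_count.
by apply/hasP => -[z /h /= hz]; rewrite ltnNge (leq_trans hz hyx).
Qed.

Lemma nth_gt a x j : sorted geq a -> (x < nth 0 a j) = (j < count (fun y => x < y) a).
Proof.
elim: a j => [|y a IH] j //=; first by rewrite nth_nil.
move=> hp; have ha := path_sorted hp.
case: (ltnP x y) => hxy /=.
  by case: j => [|j] //=; rewrite IH // add1n ltnS.
rewrite add0n (count_le_zero hp hxy).
case: j => [|j] /=; first by rewrite ltnNge hxy.
rewrite IH // (count_le_zero hp hxy) //.
Qed.

Lemma balaux_X A a d j u : sorted geq a -> u <= j -> bal_aux (A :: a) d j.+1 u = balX a d u.
Proof.
move=> ha; elim: d j u => [|x d IH] j u //= huj.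
case: eqP => [e|ne].
  rewrite andbT leqNgt nth_gt // e ltnNge huj /= IH //.
  exact: leqW.
by rewrite andbF IH.
Qed.

Lemma bal_opens c a : bal c [seq (x,false) | x <- a] = 0.
Proof. by elim: a c => [|x a IH] c //=. Qed.

Lemma balX_word d : forall a2 a1 u, sorted geq d -> sorted geq a2 ->
  (forall x y, x \in d -> y \in a1 -> x < y) -> u <= size a1 ->
  bal (size a1 - u) (lmerge d a2) = balX (a1 ++ a2) d u.
Proof.
elim: d => [|x d IHd] a2 a1 u hd ha2 hlt hu; first by rewrite lmerge_nil_l bal_opens.
have hd' := path_sorted hd.
have hxd : forall x', x' \in d -> x' <= x by apply/allP/(order_path_min geq_trans hd).
elim: a2 a1 u ha2 hlt hu => [|y a2 IHa] a1 u ha2 hlt hu.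
  rewrite lmerge_nil_r /= -lmerge_nil_r cats0.
  have -> : count (fun y => x < y) a1 = size a1.
    by apply/eqP; rewrite -all_count; apply/allP => z hz; apply: hlt; rewrite ?inE ?eqxx.
  case: eqP => [<-|ne].
    rewrite subnn; congr _.+1; have := IHd [::] a1 (size a1) hd' isT _ (leqnn _); rewrite subnn cats0; apply.
    by move=> x' z hx' hz; apply: hlt; rewrite // inE hx' orbT //.
  have hu' : u < size a1 by rewrite ltn_neqAle hu andbT; apply/eqP => e; apply: ne; rewrite e.
  have hu2 := hu'; rewrite -subn_gt0 in hu'; case E: (size a1 - u) hu' => [|c] // _.
  rewrite -(cats0 a1) -IHd // ?subnS ?E // => x' z hx' hz; apply: hlt; rewrite // inE hx' orbT //.
rewrite lmerge_cons; case: leqP => hyx.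
- rewrite /=.
  have -> : count (fun z => x < z) (a1 ++ y :: a2) = size a1.
    rewrite count_cat /= (count_le_zero ha2 hyx) ltnNge hyx /= addn0 addn0.
    by apply/eqP; rewrite -all_count; apply/allP => z hz; apply: hlt; rewrite ?inE ?eqxx.
  case: eqP => [<-|ne].
    rewrite subnn; congr _.+1; have := IHd (y :: a2) a1 (size a1) hd' ha2 _ (leqnn _); rewrite subnn; apply.
    by move=> x' z hx' hz; apply: hlt; rewrite // inE hx' orbT //.
  have hu' : u < size a1 by rewrite ltn_neqAle hu andbT; apply/eqP => e; apply: ne; rewrite e.
  have hu2 := hu'; rewrite -subn_gt0 in hu'; case E: (size a1 - u) hu' => [|c] // _.
  rewrite -IHd // ?subnS ?E // => x' z hx' hz; apply: hlt; rewrite // inE hx' orbT //.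
- rewrite [bal _ _]/= -cat_rcons -IHa //.
  + by rewrite size_rcons subSn.
  + exact: path_sorted ha2.
  + move=> x' z hx'; rewrite mem_rcons inE => /orP[/eqP ->|hz]; last exact: hlt.
    move: hx'; rewrite inE => /orP[/eqP -> //|/hxd h]; exact: leq_ltn_trans h hyx.
  + by rewrite size_rcons leqW.
Qed.

Lemma bal_lmerge d a : sorted geq d -> sorted geq a -> bal 0 (lmerge d a) = balX a d 0.
Proof. by move=> hd ha; rewrite -(@balX_word d a [::] 0 hd ha). Qed.

Lemma balX0 a d u : sorted geq d -> (forall x, x \in d -> u <= count (fun y => x < y) a) ->
  (balX a d u = 0 <-> forall j, j < size d -> u + j < count (fun y => nth 0 d j < y) a).
Proof.
elim: d u => [|x d IH] u hd hu /=; first by split.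
have hd' := path_sorted hd.
have hxd : forall x', x' \in d -> x' <= x by apply/allP/(order_path_min geq_trans hd).
have mono : forall x', x' \in d -> count (fun y => x < y) a <= count (fun y => x' < y) a.
  move=> x' /hxd h; apply: sub_count => z /= hz; exact: leq_ltn_trans h hz.
have hux := hu x (mem_head _ _).
case: eqP => [e|ne].
  split=> // /(_ 0 isT); rewrite addn0 e ltnn //.
have hlt : u < count (fun y => x < y) a by rewrite ltn_neqAle hux andbT; apply/eqP => e; apply: ne; rewrite e.
have IH' := IH u.+1 hd' (fun x' hx' => leq_trans hlt (mono _ hx')).
split.
  move=> /IH' h [|j] /=; first by rewrite addn0.
  by rewrite ltnS addnS => /h; rewrite addSn.
by move=> h; apply/IH' => j hj; rewrite addSn -addnS; apply: (h j.+1).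
Qed.

Lemma strict_iff A a b : sorted geq a -> sorted geq b -> (strict_shifted (A :: a) b <-> balX a b 0 = 0).
Proof.
move=> ha hb; have B := @balX0 a b 0 hb (fun _ _ => leq0n _); rewrite /strict_shifted /=.
split.
  by move=> [_ h]; apply/B => j hj; rewrite add0n -nth_gt //; apply: h.
move=> /B h; split.
  rewrite ltnS leqNgt; apply/negP => hs.
  have := h _ hs; rewrite add0n => h2.
  by have := leq_trans h2 (count_size _ a); rewrite ltnn.
by move=> i hi; rewrite nth_gt //; have := h _ hi; rewrite add0n.
Qed.

Definition V := (seq nat * seq nat)%type.
Definition vmap (T : W -> W) (v : V) : V :=
  match v.1 with [::] => v | A :: a => let s := T (lmerge v.2 a) in (A :: opensW s, closesW s) end.

Lemma sorted_opens s : sorted R s -> sorted geq (opensW s).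
Proof.
move=> h; rewrite /opensW sorted_map; have := sorted_filter R_trans (fun p : nat * bool => ~~ p.2) h.
apply: sub_sorted => [[x a] [y b]]; rewrite /R /= => /orP[/ltnW //|/andP[/eqP -> _]] //.
Qed.
Lemma sorted_closes s : sorted R s -> sorted geq (closesW s).
Proof.
move=> h; rewrite /closesW sorted_map; have := sorted_filter R_trans (fun p : nat * bool => p.2) h.
apply: sub_sorted => [[x a] [y b]]; rewrite /R /= => /orP[/ltnW //|/andP[/eqP -> _]] //.
Qed.
Lemma mem_opens s x : x \in opensW s -> x \in map fst s.
Proof. by rewrite /opensW => /mapP [p]; rewrite mem_filter => /andP[_ hp] ->; apply: map_f. Qed.
Lemma mem_closes s x : x \in closesW s -> x \in map fst s.
Proof. by rewrite /closesW => /mapP [p]; rewrite mem_filter => /andP[_ hp] ->; apply: map_f. Qed.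
Lemma sumn_oc s : sumn (opensW s) + sumn (closesW s) = sumn (map fst s).
Proof.
elim: s => [|[x b] s IH] //=; case: b => /=; rewrite -IH.
  by rewrite addnCA.
by rewrite addnA.
Qed.
Lemma size_opens s : size (opensW s) = count (fun p => ~~ p.2) s.
Proof. by rewrite size_map size_filter. Qed.
Lemma size_closes s : size (closesW s) = count (fun p => p.2) s.
Proof. by rewrite size_map size_filter. Qed.

Definition presV (v v' : V) :=
  [/\ is_partition v'.1, is_partition v'.2, v'.1 != [::], all (fun x => x <= lpart v'.1) v'.2 &
   [/\ lpart v'.1 = lpart v.1, sumn v'.1 + sumn v'.2 = sumn v.1 + sumn v.2 &
       forall x, x \in v'.1 ++ v'.2 -> x \in v.1 ++ v.2]].

Lemma vmap_pres (T : W -> W) (v : V) :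
  (forall s, sorted R s -> sorted R (T s)) -> (forall s, map fst (T s) = map fst s) ->
  is_partition v.1 -> is_partition v.2 -> v.1 != [::] -> all (fun x => x <= lpart v.1) v.2 ->
  presV v (vmap T v).
Proof.
case: v => [[|A a] b] //= hT hf /andP[/= /andP[hA hpa] hsa] /andP[hpb hsb] _ hbA.
set s := lmerge b a.
have ha : sorted geq a := path_sorted hsa.
have haA : all (fun x => x <= A) a := order_path_min geq_trans hsa.
have hs : sorted R (T s) by apply/hT/lmerge_sorted.
have hmem : forall x, x \in opensW (T s) ++ closesW (T s) -> x \in b ++ a.
  move=> x; rewrite mem_cat => hx; rewrite -(perm_mem (fst_lmerge b a)) -/s -hf.
  by case/orP: hx => [/mem_opens|/mem_closes].
have hpos : forall x, x \in opensW (T s) ++ closesW (T s) -> 0 < x.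
  move=> x /hmem; rewrite mem_cat => /orP[/(allP hpb)|/(allP hpa)] //.
have hle : forall x, x \in opensW (T s) ++ closesW (T s) -> x <= A.
  move=> x /hmem; rewrite mem_cat => /orP[/(allP hbA)|/(allP haA)] //.
rewrite /presV /=; split.
- rewrite /is_partition /= hA /=; apply/andP; split.
    by apply/allP => x hx; apply: hpos; rewrite mem_cat hx.
  rewrite path_min_sorted ?sorted_opens //; apply/allP => x hx; apply: hle; rewrite mem_cat hx //.
- rewrite /is_partition sorted_closes // andbT; apply/allP => x hx; apply: hpos; rewrite mem_cat hx orbT //.
- by [].
- by apply/allP => x hx; apply: hle; rewrite mem_cat hx orbT //.
split => //.
  by rewrite -addnA sumn_oc hf (perm_sumn (fst_lmerge b a)) sumn_cat [sumn b + _]addnC addnA.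
move=> x; rewrite inE => /orP[/eqP ->|/hmem]; first by rewrite inE eqxx.
by rewrite mem_cat => h; rewrite inE mem_cat; case/orP: h => ->; rewrite ?orbT.
Qed.

Lemma count_oc (s : W) : count (fun p => ~~ p.2) s + count (fun p => p.2) s = size s.
Proof. by rewrite addnC count_predC. Qed.

Lemma phi_rank A a b m : sorted geq a -> sorted geq b ->
  size a = size b + m ->
  let v' := vmap (Fw 0) (A :: a, b) in
  size v'.1 = size v'.2 + (m + 2 * balanced (A :: a) b) + 1 /\ strict_shifted v'.1 v'.2.
Proof.
move=> ha hb hm /=; set s := lmerge b a.
have hs : sorted R s by apply: lmerge_sorted.
have hbal : balanced (A :: a) b = bal 0 s by rewrite /balanced (balaux_X A b ha (leqnn 0)) bal_lmerge.
split.
  rewrite size_opens size_closes hbal.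
  have h1 := countF 0 s; have h2 := count_oc (Fw 0 s); have h3 := count_oc s.
  have h4 : size (Fw 0 s) = size s by rewrite -(size_map fst) fstF size_map.
  have ho : count (fun p => ~~ p.2) s = size a by rewrite -size_opens opens_lmerge.
  have hc : count (fun p => p.2) s = size b by rewrite -size_closes closes_lmerge.
  nlia.
have hs' : sorted R (Fw 0 s) := Fsorted 0 hs.
apply/strict_iff; [exact: sorted_opens | exact: sorted_closes |].
rewrite -bal_lmerge ?sorted_opens ?sorted_closes // lmerge_split // bal_dip subn0.
by apply/eqP; rewrite -leqn0 dipF_le.
Qed.

Lemma psi_rank A a b m t : sorted geq a -> sorted geq b -> strict_shifted (A :: a) b ->
  size a = size b + (m + 2 * t) ->
  let v' := vmap (Gw t) (A :: a, b) in
  size v'.1 = size v'.2 + m + 1 /\ balanced v'.1 v'.2 = t.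
Proof.
move=> ha hb hst hm /=; set s := lmerge b a.
have hs : sorted R s by apply: lmerge_sorted.
have hd : dip s = 0.
  have := (strict_iff A ha hb).1 hst; rewrite -bal_lmerge // bal_dip subn0 => //.
have hs' : sorted R (Gw t s) := Gsorted t hs.
have hFG : Fw 0 (Gw t s) = s by apply: FG; rewrite hd.
have ho : count (fun p => ~~ p.2) s = size a by rewrite -size_opens opens_lmerge.
have hc : count (fun p => p.2) s = size b by rewrite -size_closes closes_lmerge.
have hbG : bal 0 (Gw t s) = t.
  apply: balG; rewrite ?hd //; rewrite ho hc addn0 hm; apply/leP; nlia.
split.
  rewrite size_opens size_closes.
  have h1 := countF 0 (Gw t s); rewrite hFG hbG in h1.
  have h2 := count_oc (Gw t s); have h3 := count_oc s.
  have h4 : size (Gw t s) = size s by rewrite -(size_map fst) fstG size_map.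
  nlia.
rewrite /balanced (balaux_X A _ (sorted_opens hs') (leqnn 0)) -bal_lmerge ?sorted_opens ?sorted_closes //.
by rewrite lmerge_split.
Qed.

Lemma phi_psi A a b t : sorted geq a -> sorted geq b -> strict_shifted (A :: a) b ->
  vmap (Fw 0) (vmap (Gw t) (A :: a, b)) = (A :: a, b).
Proof.
move=> ha hb hst /=; set s := lmerge b a.
have hs : sorted R s by apply: lmerge_sorted.
have hd : dip s = 0.
  have := (strict_iff A ha hb).1 hst; rewrite -bal_lmerge // bal_dip subn0 => //.
rewrite /vmap /= -/s lmerge_split ?Gsorted // FG ?hd //.
by rewrite opens_lmerge closes_lmerge.
Qed.

Lemma psi_phi A a b : sorted geq a -> sorted geq b ->
  vmap (Gw (balanced (A :: a) b)) (vmap (Fw 0) (A :: a, b)) = (A :: a, b).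
Proof.
move=> ha hb /=; set s := lmerge b a.
have hs : sorted R s by apply: lmerge_sorted.
have hbal : balanced (A :: a) b = bal 0 s by rewrite /balanced (balaux_X A b ha (leqnn 0)) bal_lmerge.
by rewrite /vmap /= -/s lmerge_split ?Fsorted // hbal GF opens_lmerge closes_lmerge.
Qed.

Definition x0 : V := ([::], [::]).
Definition vec (e : dsymb) (i : nat) : V := nth x0 (ds_vec e) i.-1.
Definition Tr (g : nat -> V -> V) (e : dsymb) : dsymb :=
  DSymb (ds_D e) (mkseq (fun j => g j.+1 (nth x0 (ds_vec e) j)) (size (ds_vec e))).

Lemma Tr_size g e : size (ds_vec (Tr g e)) = size (ds_vec e).
Proof. by rewrite /= size_mkseq. Qed.

Lemma Tr_vec g e i : 1 <= i <= size (ds_vec e) -> vec (Tr g e) i = g i (vec e i).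
Proof.
case: i => [|i] // /andP[_ hi]; rewrite /vec /= nth_mkseq //.
Qed.

Lemma alpha_vec e i : alpha e i = (vec e i).1.
Proof. by []. Qed.
Lemma beta_vec e i : beta e i = (vec e i).2.
Proof. by []. Qed.

Lemma Tr_map (h : V -> nat) g e : (forall i, 1 <= i <= size (ds_vec e) -> h (g i (vec e i)) = h (vec e i)) ->
  map h (ds_vec (Tr g e)) = map h (ds_vec e).
Proof.
move=> H; rewrite /= /mkseq -map_comp.
rewrite -[in RHS](mkseq_nth x0 (ds_vec e)) /mkseq -map_comp.
apply/eq_in_map => j; rewrite mem_iota add0n /= => hj.
by have := H j.+1; rewrite /vec /= => ->.
Qed.

Lemma Tr_kmds k n g e : 0 < k -> is_kmds k n e ->
  (forall i, 1 <= i < k -> presV (vec e i) (g i (vec e i))) -> g k (vec e k) = vec e k ->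
  is_kmds k n (Tr g e).
Proof.
move=> hk0 [hs [hp [hw [h1 [h2 [h3 h4]]]]]] hP hk.
have hv : forall i, 1 <= i <= k -> vec (Tr g e) i = g i (vec e i).
  by move=> i hi; rewrite Tr_vec // hs.
have hlp : forall i, 1 <= i <= k -> lpart (vec (Tr g e) i).1 = lpart (vec e i).1.
  move=> i /andP[i1 ik]; rewrite hv ?i1 //; case: (ltngtP i k) ik => // [hik|->] _.
    by case: (hP i); rewrite ?i1 // => _ _ _ _ [].
  by rewrite hk.
have hsub : forall i, 1 <= i <= k -> forall x, x \in (vec (Tr g e) i).1 ++ (vec (Tr g e) i).2 ->
    x \in (vec e i).1 ++ (vec e i).2.
  move=> i /andP[i1 ik]; rewrite hv ?i1 //; case: (ltngtP i k) ik => // [hik|->] _.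
    by case: (hP i); rewrite ?i1 // => _ _ _ _ [].
  by rewrite hk.
split; first by rewrite Tr_size.
split.
  move=> i /andP[i1 ik]; rewrite !alpha_vec !beta_vec hv ?i1 //.
  case: (ltngtP i k) ik => // [hik|->] _.
    by case: (hP i); rewrite ?i1.
  by rewrite hk; apply: hp; rewrite leqnn andbT.
split.
  rewrite /ds_weight -hw /ds_weight /=; congr (_ + _).
  congr sumn; apply: (@Tr_map (fun v : V => sumn v.1 + sumn v.2) g e) => i /andP[i1]; rewrite hs => ik.
  case: (ltngtP i k) ik => // [hik|->] _; last by rewrite hk.
  by case: (hP i); rewrite ?i1 // => _ _ _ _ [].
split.
  move=> i /andP[i1 ik]; rewrite alpha_vec hv ?i1 ?(ltnW ik) //.
  by case: (hP i); rewrite ?i1.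
split.
  move=> i /andP[i1 ik]; rewrite alpha_vec beta_vec hv ?i1 ?(ltnW ik) //.
  by case: (hP i); rewrite ?i1.
split.
  move=> i /andP[i2 ik].
  have i1 : 1 <= i by apply: leq_trans i2.
  have hi1 : 1 <= i.-1 <= k by rewrite -ltnS prednK // i2 (leq_trans (leq_pred _) ik).
  rewrite !alpha_vec !beta_vec hlp //.
  have := h3 i; rewrite i2 ik => /(_ isT) [ha hb].
  have hsi := hsub i; rewrite i1 ik in hsi.
  split; apply/allP => x hx; have := hsi isT x; rewrite mem_cat hx ?orbT => /(_ isT);
    rewrite mem_cat => /orP[/(allP ha)|/(allP hb)] //.
rewrite !alpha_vec !beta_vec hv ?hk0 ?leqnn // hk.
exact: h4.
Qed.

Lemma Tr_comp g1 g2 e : (forall i, 1 <= i <= size (ds_vec e) -> g2 i (g1 i (vec e i)) = vec e i) ->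
  Tr g2 (Tr g1 e) = e.
Proof.
case: e => D vs H; rewrite /Tr /=; congr DSymb.
apply: (eq_from_nth (x0:=x0)); rewrite ?size_mkseq // => j hj.
rewrite nth_mkseq ?size_mkseq // nth_mkseq //.
exact: (H j.+1).
Qed.

Import GRing.Theory Num.Theory.

Lemma rk1 x y m : ((Posz x - Posz y - 1)%R = Posz m) <-> x = (y + m + 1)%N.
Proof.
split => [h|->].
  have : Posz x = (Posz m + 1 + Posz y)%R by rewrite -h !subrK.
  by rewrite -!PoszD => -[->]; rewrite addnC addnA.
by rewrite !PoszD addrAC addrK addrAC subrr add0r.
Qed.
Lemma rk0 x y m : ((Posz x - Posz y)%R = Posz m) <-> x = (y + m)%N.
Proof.
split => [h|->].
  have : Posz x = (Posz m + Posz y)%R by rewrite -h subrK.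
  by rewrite -!PoszD => -[->]; rewrite addnC.
by rewrite PoszD addrAC subrr add0r.
Qed.

Definition gphi k i (v : V) : V := if i < k then vmap (Fw 0) v else v.
Definition gpsi k (t : nat -> nat) i (v : V) : V := if i < k then vmap (Gw (t i)) v else v.

Lemma part_sorted (l : seq nat) : is_partition l -> sorted geq l.
Proof. by case/andP. Qed.

Lemma phi_ok k n (m t : nat -> nat) e : 0 < k -> is_kmds k n e ->
  (forall i, 1 <= i <= k -> rank k e i = Posz (m i)) ->
  (forall i, 1 <= i < k -> nb k e i = t i) ->
  is_strict_shifted_kmds k n (Tr (gphi k) e) /\
  (forall i, 1 <= i < k -> rank k (Tr (gphi k) e) i = Posz (m i + 2 * t i)) /\
  rank k (Tr (gphi k) e) k = Posz (m k).
Proof.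
move=> hk0 he hr hn.
have hs := he.1.
have [_ [hp [_ [h1 [h2 _]]]]] := he.
have hv : forall i, 1 <= i <= k -> vec (Tr (gphi k) e) i = gphi k i (vec e i).
  by move=> i hi; rewrite Tr_vec // hs.
have key : forall i, 1 <= i < k -> exists A a b, vec e i = (A :: a, b) /\ sorted geq a /\ sorted geq b.
  move=> i hi; have := h1 i hi; have := hp i; rewrite (ltnW (proj2 (andP hi))) (proj1 (andP hi)).
  move=> /(_ isT) []; rewrite alpha_vec beta_vec; case: (vec e i) => [[|A a] b] //= hpa hpb _.
  exists A, a, b; split=> //; split; [exact: path_sorted (part_sorted hpa) | exact: part_sorted].
split; [split|split].
- apply: Tr_kmds => //; last by rewrite /gphi ltnn.
  move=> i hi; rewrite /gphi (proj2 (andP hi)); apply: vmap_pres.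
  + exact: Fsorted.
  + exact: fstF.
  + by have := hp i; rewrite (ltnW (proj2 (andP hi))) (proj1 (andP hi)) => /(_ isT) [].
  + by have := hp i; rewrite (ltnW (proj2 (andP hi))) (proj1 (andP hi)) => /(_ isT) [].
  + exact: h1.
  + exact: h2.
- move=> i hi; have [A [a [b [E [ha hb]]]]] := key i hi.
  have := hr i; rewrite (ltnW (proj2 (andP hi))) (proj1 (andP hi)) => /(_ isT).
  rewrite /rank (proj2 (andP hi)) !alpha_vec !beta_vec E => /rk1 /=; rewrite addn1 => -[hm].
  rewrite hv ?(ltnW (proj2 (andP hi))) ?(proj1 (andP hi)) //.
  by rewrite /gphi (proj2 (andP hi)) E; have [] := phi_rank A ha hb hm.
- move=> i hi; have [A [a [b [E [ha hb]]]]] := key i hi.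
  have := hr i; rewrite (ltnW (proj2 (andP hi))) (proj1 (andP hi)) => /(_ isT).
  rewrite /rank (proj2 (andP hi)) !alpha_vec !beta_vec E => /rk1 /=; rewrite addn1 => -[hm].
  have := hn i hi; rewrite /nb (proj2 (andP hi)) !alpha_vec !beta_vec E => <-.
  rewrite hv ?(ltnW (proj2 (andP hi))) ?(proj1 (andP hi)) //.
  rewrite /gphi (proj2 (andP hi)) E; have [hh _] := phi_rank A ha hb hm.
  by apply/rk1.
- have := hr k; rewrite hk0 leqnn => /(_ isT).
  by rewrite /rank ltnn !alpha_vec !beta_vec hv ?hk0 ?leqnn // /gphi ltnn.
Qed.

Lemma psi_ok k n (m t : nat -> nat) e : 0 < k -> is_strict_shifted_kmds k n e ->
  (forall i, 1 <= i < k -> rank k e i = Posz (m i + 2 * t i)) ->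
  rank k e k = Posz (m k) ->
  is_kmds k n (Tr (gpsi k t) e) /\
  (forall i, 1 <= i <= k -> rank k (Tr (gpsi k t) e) i = Posz (m i)) /\
  (forall i, 1 <= i < k -> nb k (Tr (gpsi k t) e) i = t i).
Proof.
move=> hk0 [he hst] hr hrk.
have hs := he.1.
have [_ [hp [_ [h1 [h2 _]]]]] := he.
have hv : forall i, 1 <= i <= k -> vec (Tr (gpsi k t) e) i = gpsi k t i (vec e i).
  by move=> i hi; rewrite Tr_vec // hs.
have key : forall i, 1 <= i < k -> exists A a b, vec e i = (A :: a, b) /\ sorted geq a /\ sorted geq b.
  move=> i hi; have := h1 i hi; have := hp i; rewrite (ltnW (proj2 (andP hi))) (proj1 (andP hi)).
  move=> /(_ isT) []; rewrite alpha_vec beta_vec; case: (vec e i) => [[|A a] b] //= hpa hpb _.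
  exists A, a, b; split=> //; split; [exact: path_sorted (part_sorted hpa) | exact: part_sorted].
split; [|split].
- apply: Tr_kmds => //; last by rewrite /gpsi ltnn.
  move=> i hi; rewrite /gpsi (proj2 (andP hi)); apply: vmap_pres.
  + exact: Gsorted.
  + exact: fstG.
  + by have := hp i; rewrite (ltnW (proj2 (andP hi))) (proj1 (andP hi)) => /(_ isT) [].
  + by have := hp i; rewrite (ltnW (proj2 (andP hi))) (proj1 (andP hi)) => /(_ isT) [].
  + exact: h1.
  + exact: h2.
- move=> i /andP[i1 ik]; case: (ltngtP i k) ik => // [hik|->] _; last first.
    move: hrk; rewrite /rank ltnn !alpha_vec !beta_vec hv ?hk0 ?leqnn //.
    by rewrite /gpsi ltnn.
  have hi : 1 <= i < k by rewrite i1 hik.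
  have [A [a [b [E [ha hb]]]]] := key i hi.
  have := hr i hi; rewrite /rank hik !alpha_vec !beta_vec E => /rk1 /=; rewrite addn1 => -[hm].
  have hs' : strict_shifted (A :: a) b by have := hst i hi; rewrite !alpha_vec !beta_vec E.
  rewrite hv ?i1 ?(ltnW hik) // /gpsi hik E.
  have [hh _] := psi_rank ha hb hs' hm.
  by apply/rk1.
- move=> i hi; have [A [a [b [E [ha hb]]]]] := key i hi.
  have := hr i hi; rewrite /rank (proj2 (andP hi)) !alpha_vec !beta_vec E => /rk1 /=; rewrite addn1 => -[hm].
  have hs' : strict_shifted (A :: a) b by have := hst i hi; rewrite !alpha_vec !beta_vec E.
  rewrite /nb (proj2 (andP hi)) !alpha_vec !beta_vec hv ?(ltnW (proj2 (andP hi))) ?(proj1 (andP hi)) //.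
  rewrite /gpsi (proj2 (andP hi)) E.
  by have [_ hh] := psi_rank ha hb hs' hm.
Qed.

Lemma rt1 k n e (t : nat -> nat) : is_kmds k n e -> (forall i, 1 <= i < k -> nb k e i = t i) ->
  Tr (gpsi k t) (Tr (gphi k) e) = e.
Proof.
move=> he hn; have hs := he.1; have [_ [hp [_ [h1 _]]]] := he.
apply: Tr_comp => i; rewrite hs => /andP[i1 ik].
rewrite /gphi /gpsi; case: (ltnP i k) => hik //.
have hi : 1 <= i < k by rewrite i1 hik.
have := hn i hi; rewrite /nb hik !alpha_vec !beta_vec => <-.
have := h1 i hi; have := hp i; rewrite i1 (ltnW hik) => /(_ isT) [].
rewrite alpha_vec beta_vec; case: (vec e i) => [[|A a] b] //= hpa hpb _.
by apply: psi_phi; [exact: path_sorted (part_sorted hpa) | exact: part_sorted].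
Qed.

Lemma rt2 k n e (t : nat -> nat) : is_strict_shifted_kmds k n e ->
  Tr (gphi k) (Tr (gpsi k t) e) = e.
Proof.
move=> [he hst]; have hs := he.1; have [_ [hp [_ [h1 _]]]] := he.
apply: Tr_comp => i; rewrite hs => /andP[i1 ik].
rewrite /gphi /gpsi; case: (ltnP i k) => hik //.
have hi : 1 <= i < k by rewrite i1 hik.
have := hst i hi; have := h1 i hi; have := hp i; rewrite i1 (ltnW hik) => /(_ isT) [].
rewrite !alpha_vec !beta_vec; case: (vec e i) => [[|A a] b] //= hpa hpb _ hss.
by apply: phi_psi => //; [exact: path_sorted (part_sorted hpa) | exact: part_sorted].
Qed.

From Stdlib Require Import ProofIrrelevance.

Lemma sig_eq (A : Type) (P : A -> Prop) (x y : {a | P a}) : proj1_sig x = proj1_sig y -> x = y.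
Proof. case: x => a pa; case: y => b pb /= e; subst b; f_equal; apply: proof_irrelevance. Qed.

Theorem mainTheorem7 (k n : nat) (m t : nat -> nat) (hk : 1 <= k) :
  exists f :
    {e : dsymb | is_kmds k n e /\
                 (forall i, 1 <= i <= k -> rank k e i = Posz (m i)) /\
                 (forall i, 1 <= i < k -> nb k e i = t i)} ->
    {e : dsymb | is_strict_shifted_kmds k n e /\
                 (forall i, 1 <= i < k -> rank k e i = Posz (m i + 2 * t i)) /\
                 rank k e k = Posz (m k)},
    bijective f.
Proof.
pose f := fun x : {e : dsymb | is_kmds k n e /\
                 (forall i, 1 <= i <= k -> rank k e i = Posz (m i)) /\
                 (forall i, 1 <= i < k -> nb k e i = t i)} =>
  exist (fun e => is_strict_shifted_kmds k n e /\
                 (forall i, 1 <= i < k -> rank k e i = Posz (m i + 2 * t i)) /\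
                 rank k e k = Posz (m k)) (Tr (gphi k) (proj1_sig x))
    (let: conj a (conj b c) := proj2_sig x in phi_ok hk a b c).
pose g := fun y : {e : dsymb | is_strict_shifted_kmds k n e /\
                 (forall i, 1 <= i < k -> rank k e i = Posz (m i + 2 * t i)) /\
                 rank k e k = Posz (m k)} =>
  exist (fun e => is_kmds k n e /\
                 (forall i, 1 <= i <= k -> rank k e i = Posz (m i)) /\
                 (forall i, 1 <= i < k -> nb k e i = t i)) (Tr (gpsi k t) (proj1_sig y))
    (let: conj a (conj b c) := proj2_sig y in psi_ok hk a b c).
exists f; exists g.
- move=> [e [a [b c]]]; apply: sig_eq => /=; exact: rt1 a c.
- move=> [e [a [b c]]]; apply: sig_eq => /=; exact: rt2 a.
Qed.
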